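(* Consider the zooming algorithm on an instance of the Lipschitz MAB problem, let $C>0$, let $d$ be the $C$-zooming dimension of the instance and $\gamma=\frac{d+1}{d+2}$. If phase $i$ is clean, then for every round $t$ of the phase (counted from the start of the phase), $\sum_{v\in S(t)}\Delta(v)\,n_t(v)\le O(C\,i)^{1-\gamma}\,t^{\gamma}$, where $S(t)$ is the set of strategies active at time $t$ and the constant in $O(\cdot)$ is absolute.
   Context: Lipschitz MAB problem on $(L,X)$ of diameter $\le1$: unknown $\mu:X\to[0,1]$ with $|\mu(x)-\mu(y)|\le L(x,y)$; playing $v$ yields an independent sample in $[0,1]$ of mean $\mu(v)$. $\mu^*=\sup_X\mu$, $\Delta(v)=\mu^*-\mu(v)$. Zooming algorithm: phases $i=1,2,\dots$ of $2^i$ rounds; within phase $i$, $n_t(v)$ = number of plays of $v$ in this phase before round $t$, $\mu_t(v)$ = their average reward ($0$ if none), $r_t(v)=\sqrt{8i/(2+n_t(v))}$, $I_t(v)=\mu_t(v)+2r_t(v)$; at phase start nothing is active; $u$ is covered at $t$ if $u\in B(v,r_t(v))$ (open ball) for some active $v$; in each round, if some strategy is uncovered one such is activated, then an active strategy of maximal index is played. Phase $i$ is clean if $|\mu_t(v)-\mu(v)|\le r_t(v)$ for every strategy $v$ played at least once in the phase and every round $t$ of the phase. $C$-zooming dimension: smallest $d$ such that for every $r\in(0,1]$ the set $\{x: r/2<\mu^*-\mu(x)\le r\}$ can be covered by $C r^{-d}$ sets of diameter at most $r/8$. *)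

(* Defs.v *)
From Stdlib Require Import Reals Lra Lia Classical ClassicalEpsilon.
Open Scope R_scope.

Definition metric_diam1 {X : Type} (L : X -> X -> R) : Prop :=
  (forall x y, 0 <= L x y) /\
  (forall x y, L x y = 0 <-> x = y) /\
  (forall x y, L x y = L y x) /\
  (forall x y z, L x z <= L x y + L y z) /\
  (forall x y, L x y <= 1).

Definition lipschitz_payoff {X : Type} (L : X -> X -> R) (mu : X -> R) : Prop :=
  (forall x, 0 <= mu x <= 1) /\ (forall x y, Rabs (mu x - mu y) <= L x y).

Definition is_sup_payoff {X : Type} (mu : X -> R) (mustar : R) : Prop :=
  is_lub (fun r => exists x, r = mu x) mustar.

Definition zoom_covers {X : Type} (L : X -> X -> R) (mu : X -> R) (mustar C d : R)
  : Prop :=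
  forall r, 0 < r <= 1 ->
    exists (N : nat) (S : nat -> X -> Prop),
      INR N <= C * Rpower r (- d) /\
      (forall j, (j < N)%nat -> forall x y, S j x -> S j y -> L x y <= r / 8) /\
      (forall x, r / 2 < mustar - mu x <= r -> exists j, (j < N)%nat /\ S j x).

Definition is_zooming_dim {X : Type} (L : X -> X -> R) (mu : X -> R) (mustar C d : R)
  : Prop :=
  0 <= d /\ zoom_covers L mu mustar C d /\
  (forall d', 0 <= d' -> zoom_covers L mu mustar C d' -> d <= d').

(** * One phase of the zooming algorithm, as an execution trace.
    Rounds of phase i are t = 1 .. 2^i.
    act t  : strategy activated in round t (if any)
    play t : strategy played in round t
    rew t  : reward observed in round t *)

Definition indic {X : Type} (a b : X) : nat :=
  if excluded_middle_informative (a = b) then 1%nat else 0%nat.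

Fixpoint cnt {X : Type} (play : nat -> X) (v : X) (k : nat) : nat :=
  match k with
  | O => O
  | S k' => (cnt play v k' + indic (play (S k')) v)%nat
  end.

Fixpoint sumrew {X : Type} (play : nat -> X) (rew : nat -> R) (v : X) (k : nat) : R :=
  match k with
  | O => 0
  | S k' => sumrew play rew v k' + INR (indic (play (S k')) v) * rew (S k')
  end.

Definition n_t {X : Type} (play : nat -> X) (t : nat) (v : X) : nat :=
  cnt play v (t - 1).

Definition mu_t {X : Type} (play : nat -> X) (rew : nat -> R) (t : nat) (v : X) : R :=
  if Nat.eqb (n_t play t v) 0 then 0
  else sumrew play rew v (t - 1) / INR (n_t play t v).

Definition r_t {X : Type} (i : nat) (play : nat -> X) (t : nat) (v : X) : R :=
  sqrt (8 * INR i / (2 + INR (n_t play t v))).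

Definition I_t {X : Type} (i : nat) (play : nat -> X) (rew : nat -> R) (t : nat) (v : X)
  : R := mu_t play rew t v + 2 * r_t i play t v.

Definition active_before {X : Type} (act : nat -> option X) (t : nat) (v : X) : Prop :=
  exists s, (1 <= s < t)%nat /\ act s = Some v.

(* v active at time t (activated in round <= t) : v in S(t) *)
Definition active_at {X : Type} (act : nat -> option X) (t : nat) (v : X) : Prop :=
  exists s, (1 <= s <= t)%nat /\ act s = Some v.

Definition covered {X : Type} (L : X -> X -> R) (i : nat) (act : nat -> option X)
  (play : nat -> X) (t : nat) (u : X) : Prop :=
  exists v, active_before act t v /\ L v u < r_t i play t v.

Definition zooming_phase {X : Type} (L : X -> X -> R) (i : nat)
  (act : nat -> option X) (play : nat -> X) (rew : nat -> R) : Prop :=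
  forall t, (1 <= t <= 2 ^ i)%nat ->
    (act t = None -> forall u, covered L i act play t u) /\
    (forall u, act t = Some u -> ~ covered L i act play t u) /\
    active_at act t (play t) /\
    (forall v, active_at act t v -> I_t i play rew t v <= I_t i play rew t (play t)) /\
    0 <= rew t <= 1.

Definition clean_phase {X : Type} (mu : X -> R) (i : nat) (play : nat -> X)
  (rew : nat -> R) : Prop :=
  forall v t,
    (exists s, (1 <= s <= 2 ^ i)%nat /\ play s = v) ->
    (1 <= t <= 2 ^ i)%nat ->
    Rabs (mu_t play rew t v - mu v) <= r_t i play t v.

(* sum over S(t) of f, enumerating S(t) by activation round
   (activated strategies are pairwise distinct, since an active v covers itself) *)
Fixpoint sum_active {X : Type} (act : nat -> option X) (f : X -> R) (k : nat) : R :=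
  match k with
  | O => 0
  | S k' => sum_active act f k' +
            match act (S k') with Some v => f v | None => 0 end
  end.

(* Main.v *)
Require Import Defs.
From Stdlib Require Import Reals Lra Lia Classical ClassicalEpsilon List ZArith.
Open Scope R_scope.

Lemma sa_le {X} (act : nat -> option X) (F G : X -> R) t :
  (forall v, F v <= G v) -> sum_active act F t <= sum_active act G t.
Proof.
  intros H; induction t; simpl; [lra|].
  destruct (act (S t)); [specialize (H x)|]; lra.
Qed.

Lemma sa_lin {X} (act : nat -> option X) (a : R) (F G : X -> R) t :
  sum_active act (fun v => a * F v + G v) t = a * sum_active act F t + sum_active act G t.
Proof.
  induction t; simpl; [ring|]. rewrite IHt. destruct (act (S t)); ring.
Qed.

Lemma sa_nonneg {X} (act : nat -> option X) (F : X -> R) t :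
  (forall v, 0 <= F v) -> 0 <= sum_active act F t.
Proof.
  intros H; induction t; simpl; [lra|]. destruct (act (S t)); [specialize (H x)|]; lra.
Qed.

Lemma sumf_zero M : sum_f_R0 (fun _ => 0) M = 0.
Proof. induction M; simpl; lra. Qed.

Lemma sa_exch {X} (act : nat -> option X) (h : nat -> X -> R) M t :
  sum_active act (fun v => sum_f_R0 (fun k => h k v) M) t
  = sum_f_R0 (fun k => sum_active act (h k) t) M.
Proof.
  induction t; simpl.
  - rewrite sumf_zero; auto.
  - rewrite IHt. destruct (act (S t)).
    + rewrite (sum_plus (fun k => sum_active act (h k) t) (fun k => h k x)). auto.
    + rewrite Rplus_0_r. apply sum_eq. intros; ring.
Qed.

Lemma sumf_ge M (g : nat -> R) j :
  (forall k, 0 <= g k) -> (j <= M)%nat -> g j <= sum_f_R0 g M.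
Proof.
  intros H Hj; induction M; simpl.
  - replace j with 0%nat by lia; lra.
  - destruct (Nat.eq_dec j (S M)).
    + subst. pose proof (cond_pos_sum g M H). lra.
    + specialize (H (S M)). assert (j <= M)%nat by lia. specialize (IHM H0). lra.
Qed.

Lemma pig {X} (act : nat -> option X) (P : X -> Prop) (f : X -> nat) N t :
 (forall s v, (1<=s<=t)%nat -> act s = Some v -> P v -> (f v < N)%nat) ->
 (forall s1 s2 u v, (1 <= s1)%nat -> (s1 < s2)%nat -> (s2 <= t)%nat ->
    act s1 = Some u -> act s2 = Some v -> P u -> P v -> f u = f v -> False) ->
 sum_active act (fun v => if excluded_middle_informative (P v) then 1 else 0) t <= INR N.
Proof.
  intros H1 H2.
  assert (G : forall t', (t' <= t)%nat -> exists l,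
    sum_active act (fun v => if excluded_middle_informative (P v) then 1 else 0) t'
      = INR (length l) /\ NoDup l /\
    (forall y, In y l -> exists s u, (1 <= s <= t')%nat /\ act s = Some u /\ P u /\ y = f u)).
  { induction t'; intros Ht.
    - exists nil. simpl. split; [auto|split]; [constructor|]. intros y [].
    - destruct IHt' as [l [E [ND M]]]; [lia|]. simpl.
      destruct (act (S t')) as [v|] eqn:Ea.
      + destruct (excluded_middle_informative (P v)) as [Pv|Pv].
        * exists (f v :: l). simpl length. rewrite S_INR, E. split; [auto|split].
          -- constructor; auto. intros Hin. destruct (M _ Hin) as [s [u [Hs [Eu [Pu Ey]]]]].
             apply (H2 s (S t') u v); auto; lia.
          -- intros y [<-|Hin].
             ++ exists (S t'), v. repeat split; auto; lia.
             ++ destruct (M _ Hin) as [s [u [Hs [Eu [Pu Ey]]]]]. exists s, u. repeat split; auto; lia.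
        * exists l. rewrite E. split; [ring|split; auto].
          intros y Hin. destruct (M _ Hin) as [s [u [Hs [Eu [Pu Ey]]]]]. exists s, u. repeat split; auto; lia.
      + exists l. rewrite E. split; [ring|split; auto].
        intros y Hin. destruct (M _ Hin) as [s [u [Hs [Eu [Pu Ey]]]]]. exists s, u. repeat split; auto; lia. }
  destruct (G t (le_n _)) as [l [E [ND M]]]. rewrite E. apply le_INR.
  replace N with (length (seq 0 N)) by apply length_seq.
  apply NoDup_incl_length; auto. intros y Hin. destruct (M _ Hin) as [s [u [Hs [Eu [Pu Ey]]]]].
  apply in_seq. subst y. specialize (H1 s u Hs Eu Pu). lia.
Qed.

Lemma Rabs_le_between x y : Rabs x <= y -> - y <= x <= y.
Proof. intros H. pose proof (Rle_abs x). pose proof (Rle_abs (-x)). rewrite Rabs_Ropp in H1. lra. Qed.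

Lemma cnt_pos_played {X} (play : nat -> X) v k :
  (0 < cnt play v k)%nat -> exists s, (1 <= s <= k)%nat /\ play s = v.
Proof.
  induction k; simpl; intros H; [lia|].
  unfold indic in H. destruct (excluded_middle_informative (play (S k) = v)).
  - exists (S k); split; auto; lia.
  - destruct IHk as [s [Hs E]]; [lia|]. exists s; split; auto; lia.
Qed.

Lemma r_pos {X} i (play : nat -> X) t v : (1 <= i)%nat -> 0 < r_t i play t v.
Proof.
  intros Hi. unfold r_t. apply sqrt_lt_R0. apply le_INR in Hi. simpl in Hi.
  pose proof (pos_INR (n_t play t v)). apply Rdiv_lt_0_compat; lra.
Qed.

Lemma r_sq {X} i (play : nat -> X) t v :
  r_t i play t v * r_t i play t v = 8 * INR i / (2 + INR (n_t play t v)).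
Proof.
  unfold r_t. apply sqrt_sqrt. pose proof (pos_INR (n_t play t v)). pose proof (pos_INR i).
  apply Rle_mult_inv_pos; lra.
Qed.

Lemma I_big {X} i (play : nat -> X) rew t w : (1 <= i)%nat ->
  n_t play t w = 0%nat -> 4 <= I_t i play rew t w.
Proof.
  intros Hi Hn. unfold I_t, mu_t. rewrite Hn. simpl Nat.eqb. cbv iota.
  assert (2 <= r_t i play t w).
  { unfold r_t. rewrite Hn. assert (E4 : sqrt 4 = 2).
    { replace 4 with (2*2) by ring. apply sqrt_square; lra. }
    rewrite <- E4 at 1.
    apply sqrt_le_1_alt. apply le_INR in Hi. simpl INR in *.
    replace (8 * INR i / (2 + 0)) with (4 * INR i) by field. lra. }
  lra.
Qed.

Lemma act_n0 {X} L i act (play : nat -> X) rew s u :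
  metric_diam1 L -> (1 <= i)%nat -> zooming_phase L i act play rew ->
  (1 <= s <= 2^i)%nat -> act s = Some u -> n_t play s u = 0%nat.
Proof.
  intros HL Hi Hz Hs Ea.
  destruct (Nat.eq_dec (n_t play s u) 0) as [|Hn]; auto. exfalso.
  destruct (cnt_pos_played play u (s-1)) as [s' [Hs' E]]; [unfold n_t in Hn; lia|].
  destruct (Hz s' ltac:(lia)) as [_ [_ [[s'' [Hs'' Ea'']] _]]].
  destruct (Hz s Hs) as [_ [Hnc _]]. apply (Hnc u Ea).
  exists u. split.
  - exists s''. rewrite E in Ea''. split; auto; lia.
  - destruct HL as [_ [H0 _]]. rewrite (proj2 (H0 u u) eq_refl). apply r_pos; auto.
Qed.

Lemma factA {X} L mu mustar i act (play : nat -> X) rew s :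
 metric_diam1 L -> lipschitz_payoff L mu -> is_sup_payoff mu mustar -> (1<=i)%nat ->
 zooming_phase L i act play rew -> clean_phase mu i play rew -> (1 <= s <= 2^i)%nat ->
 mustar - mu (play s) <= 3 * r_t i play s (play s).
Proof.
  intros HL Hmu Hsup Hi Hz Hc Hs.
  destruct (Hz s Hs) as [Hnone [Hnc [Hact [Hmax _]]]].
  assert (UB : forall x, mu x <= I_t i play rew s (play s)).
  { intros x. assert (mu x <= 1) by apply (proj1 Hmu x).
    destruct (act s) as [u|] eqn:Ea.
    - assert (4 <= I_t i play rew s u) by (apply I_big; auto; eapply act_n0; eauto).
      assert (I_t i play rew s u <= I_t i play rew s (play s)).
      { apply Hmax. exists s. split; auto; lia. }
      lra.
    - destruct (Hnone eq_refl x) as [w [[s1 [Hs1 Ew]] Hlt]].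
      assert (I_t i play rew s w <= I_t i play rew s (play s)).
      { apply Hmax. exists s1. split; auto; lia. }
      destruct (Nat.eq_dec (n_t play s w) 0) as [Hn|Hn].
      + pose proof (I_big i play rew s w Hi Hn). lra.
      + destruct (cnt_pos_played play w (s-1)) as [s' [Hs' E]]; [unfold n_t in Hn; lia|].
        assert (Hcw := Hc w s ltac:(exists s'; split; auto; lia) Hs).
        apply Rabs_le_between in Hcw.
        assert (mu x - mu w <= L w x).
        { destruct HL as [_ [_ [Hsym _]]]. rewrite Hsym.
          pose proof (proj2 Hmu x w). pose proof (Rle_abs (mu x - mu w)). lra. }
        unfold I_t in *. lra. }
  assert (mustar <= I_t i play rew s (play s)).
  { apply (proj2 Hsup). intros r [x ->]. apply UB. }
  assert (Hcv := Hc (play s) s ltac:(exists s; split; auto) Hs).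
  apply Rabs_le_between in Hcv. unfold I_t in *. lra.
Qed.

Lemma gap_nonneg {X} (mu : X -> R) mustar v : is_sup_payoff mu mustar -> mu v <= mustar.
Proof. intros [H _]. apply H. exists v; auto. Qed.

Lemma factB {X} L mu mustar i act (play : nat -> X) rew :
 metric_diam1 L -> lipschitz_payoff L mu -> is_sup_payoff mu mustar -> (1<=i)%nat ->
 zooming_phase L i act play rew -> clean_phase mu i play rew ->
 forall k, (k <= 2^i)%nat -> forall v,
   INR (cnt play v k) * ((mustar - mu v) * (mustar - mu v)) <= 72 * INR i.
Proof.
  intros HL Hmu Hsup Hi Hz Hc k. induction k; intros Hk v.
  - simpl. pose proof (pos_INR i). lra.
  - simpl cnt. rewrite plus_INR. unfold indic.
    destruct (excluded_middle_informative (play (S k) = v)) as [E|E].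
    + pose proof (factA L mu mustar i act play rew (S k) HL Hmu Hsup Hi Hz Hc ltac:(lia)) as HA.
      rewrite E in HA. pose proof (gap_nonneg mu mustar v Hsup).
      pose proof (r_sq i play (S k) v) as Hr. pose proof (r_pos i play (S k) v Hi).
      unfold n_t in Hr. replace (S k - 1)%nat with k in Hr by lia.
      set (n := INR (cnt play v k)) in *. set (r := r_t i play (S k) v) in *.
      set (D := mustar - mu v) in *.
      assert (D * D <= 9 * (r * r)).
      { replace (9 * (r * r)) with ((3*r)*(3*r)) by ring. assert (0 <= D) by (unfold D; lra). apply Rmult_le_compat; lra. }
      assert (Hn : 0 <= n) by apply pos_INR.
      assert ((2 + n) * (r * r) = 8 * INR i) by (rewrite Hr; field; lra).
      simpl INR. nra.
    + simpl INR. rewrite Rplus_0_r. apply IHk. lia.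
Qed.

Lemma sep {X} L mu mustar i act (play : nat -> X) rew r s2 u :
 metric_diam1 L -> lipschitz_payoff L mu -> is_sup_payoff mu mustar -> (1<=i)%nat ->
 zooming_phase L i act play rew -> clean_phase mu i play rew ->
 0 < r <= 1 -> r/2 < mustar - mu u -> (1 <= s2 <= 2^i)%nat -> r_t i play s2 u <= r/8 -> False.
Proof.
  intros HL Hmu Hsup Hi Hz Hc Hr HD Hs2 Hrt.
  pose proof (factB L mu mustar i act play rew HL Hmu Hsup Hi Hz Hc (s2 - 1) ltac:(lia) u) as HB.
  pose proof (r_sq i play s2 u) as Hsq. pose proof (r_pos i play s2 u Hi).
  unfold n_t in Hsq. set (n := INR (cnt play u (s2 - 1))) in *.
  set (q := r_t i play s2 u) in *. set (D := mustar - mu u) in *.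
  assert (Hn : 0 <= n) by apply pos_INR.
  assert ((2 + n) * (q * q) = 8 * INR i) by (rewrite Hsq; field; lra).
  assert (HI : 1 <= INR i) by (apply le_INR in Hi; simpl in Hi; lra).
  assert (q * q <= r * r / 64).
  { replace (r * r / 64) with ((r/8)*(r/8)) by field. apply Rmult_le_compat; lra. }
  assert (r * r <= 4 * (D * D)).
  { replace (4 * (D * D)) with ((2*D)*(2*D)) by ring. apply Rmult_le_compat; lra. }
  assert (n * (r * r) <= 4 * (n * (D * D))).
  { replace (4 * (n * (D * D))) with (n * (4 * (D * D))) by ring. apply Rmult_le_compat_l; lra. }
  assert (8 * INR i <= (2 + n) * (r * r / 64)).
  { rewrite <- H0. apply Rmult_le_compat_l; lra. }
  assert (r * r <= 1) by (replace 1 with (1*1) by ring; apply Rmult_le_compat; lra).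
  assert (n * (r*r) <= 288 * INR i) by lra.
  lra.
Qed.

Lemma sa_add {X} (act : nat -> option X) (F G : X -> R) t :
  sum_active act (fun v => F v + G v) t = sum_active act F t + sum_active act G t.
Proof.
  induction t; simpl; [ring|]. rewrite IHt. destruct (act (S t)); ring.
Qed.

Lemma sa_ext {X} (act : nat -> option X) (F G : X -> R) t :
  (forall v, F v = G v) -> sum_active act F t = sum_active act G t.
Proof. intros H; induction t; simpl; auto. rewrite IHt. destruct (act (S t)); auto. rewrite H; auto. Qed.

Lemma count_distinct {X} L i act (play : nat -> X) rew w t :
  metric_diam1 L -> (1 <= i)%nat -> zooming_phase L i act play rew -> (t <= 2^i)%nat ->
  sum_active act (fun v => INR (indic w v)) t <= 1.
Proof.
  intros HL Hi Hz Ht.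
  rewrite (sa_ext act _ (fun v => if excluded_middle_informative (w = v) then 1 else 0)).
  2:{ intros v. unfold indic. destruct (excluded_middle_informative (w = v)); reflexivity. }
  replace 1 with (INR 1) by reflexivity.
  apply (pig act (fun v => w = v) (fun _ => 0%nat)); [intros; lia|].
  intros s1 s2 u v Hs1 H12 Hs2 E1 E2 Pu Pv _. subst u v.
  destruct (Hz s2 ltac:(lia)) as [_ [Hnc _]]. apply (Hnc w E2).
  exists w. split.
  - exists s1. split; auto; lia.
  - destruct HL as [_ [H0 _]]. rewrite (proj2 (H0 w w) eq_refl). apply r_pos; auto.
Qed.

Lemma sum_n {X} L i act (play : nat -> X) rew t :
  metric_diam1 L -> (1 <= i)%nat -> zooming_phase L i act play rew -> (t <= 2^i)%nat ->
  forall k, sum_active act (fun v => INR (cnt play v k)) t <= INR k.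
Proof.
  intros HL Hi Hz Ht k. induction k.
  - rewrite (sa_ext act _ (fun _ => 0)) by reflexivity. simpl INR.
    clear Ht. induction t; simpl; [lra|]. destruct (act (S t)); lra.
  - simpl cnt. rewrite (sa_ext act _ (fun v => INR (cnt play v k) + INR (indic (play (S k)) v)))
      by (intros; apply plus_INR).
    rewrite sa_add. pose proof (count_distinct L i act play rew (play (S k)) t HL Hi Hz Ht).
    rewrite S_INR. lra.
Qed.

Lemma count_shell {X} L mu mustar C d i act (play : nat -> X) rew r (Q : X -> Prop) t :
 metric_diam1 L -> lipschitz_payoff L mu -> is_sup_payoff mu mustar -> (1<=i)%nat ->
 zooming_phase L i act play rew -> clean_phase mu i play rew ->
 zoom_covers L mu mustar C d -> 0 < r <= 1 -> (t <= 2^i)%nat ->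
 sum_active act (fun v => if excluded_middle_informative
     ((r/2 < mustar - mu v <= r) /\ Q v) then 1 else 0) t <= C * Rpower r (- d).
Proof.
  intros HL Hmu Hsup Hi Hz Hc Hcov Hr Ht.
  destruct (Hcov r Hr) as [N [S [HN [Hdiam Hcv]]]].
  set (f := fun v => epsilon (inhabits 0%nat) (fun j => (j < N)%nat /\ S j v)).
  assert (Hf : forall v, r/2 < mustar - mu v <= r -> (f v < N)%nat /\ S (f v) v).
  { intros v Hv. unfold f. apply (epsilon_spec (inhabits 0%nat) (fun j => (j < N)%nat /\ S j v)).
    apply Hcv; auto. }
  apply Rle_trans with (INR N); auto.
  apply (pig act _ f).
  - intros s v _ _ [Pv _]. apply Hf; auto.
  - intros s1 s2 u v Hs1 H12 Hs2 E1 E2 [Pu _] [Pv _] Ef.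
    destruct (Hf u Pu) as [Hju Su]. destruct (Hf v Pv) as [_ Sv].
    rewrite <- Ef in Sv. pose proof (Hdiam (f u) Hju u v Su Sv) as Hd.
    destruct (Hz s2 ltac:(lia)) as [_ [Hnc _]].
    assert (r_t i play s2 u <= L u v).
    { apply Rnot_lt_le. intros Hlt. apply (Hnc v E2). exists u. split; auto.
      exists s1. split; auto; lia. }
    apply (sep L mu mustar i act play rew r s2 u); auto; try lra. lia.
Qed.

Lemma geo (ok : nat -> Prop) x E :
  2 <= x -> 0 <= E -> (forall k, ok (S k) -> ok k) -> (forall k, ok k -> x ^ k <= E) ->
  forall M, sum_f_R0 (fun k => if excluded_middle_informative (ok k) then x ^ k else 0) M <= 2 * E.
Proof.
  intros Hx HE Hdown Hb.
  assert (G : forall M,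
    sum_f_R0 (fun k => if excluded_middle_informative (ok k) then x ^ k else 0) M <= 2 * E /\
    (ok M -> sum_f_R0 (fun k => if excluded_middle_informative (ok k) then x ^ k else 0) M <= 2 * x ^ M)).
  { induction M; simpl.
    - destruct (excluded_middle_informative (ok 0%nat)) as [H|H].
      + specialize (Hb 0%nat H). simpl in Hb. split; intros; lra.
      + split; intros; lra.
    - destruct IHM as [IH1 IH2].
      destruct (excluded_middle_informative (ok (S M))) as [H|H].
      + specialize (IH2 (Hdown _ H)). pose proof (Hb _ H). simpl in H0.
        assert (0 <= x ^ M) by (apply pow_le; lra).
        assert (2 * x ^ M + x * x ^ M <= 2 * (x * x ^ M)) by nra.
        split; intros; lra.
      + split; intros; [lra|contradiction]. }
  intros M; apply G.
Qed.

Lemma exp_nat k a : exp (INR k * a) = (exp a) ^ k.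
Proof.
  induction k.
  - simpl. rewrite Rmult_0_l, exp_0. auto.
  - rewrite S_INR, Rmult_plus_distr_r, exp_plus, IHk, Rmult_1_l. simpl. ring.
Qed.

Lemma pow2_exp k : 2 ^ k = exp (INR k * ln 2).
Proof. rewrite <- ln_pow by lra. rewrite exp_ln; auto. apply pow_lt; lra. Qed.

Lemma nat_lt_pow2 n : INR n < 2 ^ n.
Proof. induction n; [simpl; lra|]. rewrite S_INR. simpl. assert (1 <= 2^n) by (apply pow_R1_Rle; lra). lra. Qed.

Lemma unbounded x : exists n : nat, x < INR n.
Proof.
  destruct (archimed x) as [H _].
  destruct (Z.lt_ge_cases 0 (up x)) as [Hz|Hz].
  - exists (Z.to_nat (up x)). rewrite INR_IZR_INZ, Z2Nat.id by lia. auto.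
  - exists 0%nat. simpl. apply IZR_le in Hz. lra.
Qed.

Lemma shell_ex M y : 0 < y <= 1 -> / 2 ^ (S M) < y ->
  exists k, (k <= M)%nat /\ / 2 ^ k / 2 < y <= / 2 ^ k.
Proof.
  revert y; induction M; intros y Hy Hl.
  - exists 0%nat. simpl in *. split; [lia|]. split; lra.
  - destruct (Rlt_le_dec (/ 2 ^ (S M)) y) as [H|H].
    + destruct (IHM y Hy H) as [k [Hk Hk2]]. exists k; split; auto; lia.
    + exists (S M). split; auto. split; auto.
      replace (/ 2 ^ S M / 2) with (/ 2 ^ S (S M)); auto.
      simpl. field. repeat split; try apply pow_nonzero; lra.
Qed.

Lemma sa_scal {X} (act : nat -> option X) (c : R) (F : X -> R) t :
  sum_active act (fun v => c * F v) t = c * sum_active act F t.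
Proof. induction t; simpl; [ring|]. rewrite IHt. destruct (act (S t)); ring. Qed.

Theorem mainTheorem11 :
  exists K : R, 0 < K /\
  forall (X : Type) (L : X -> X -> R) (mu : X -> R) (mustar C d : R)
         (i : nat) (act : nat -> option X) (play : nat -> X) (rew : nat -> R),
    metric_diam1 L ->
    lipschitz_payoff L mu ->
    is_sup_payoff mu mustar ->
    0 < C ->
    is_zooming_dim L mu mustar C d ->
    (1 <= i)%nat ->
    zooming_phase L i act play rew ->
    clean_phase mu i play rew ->
    let gamma := (d + 1) / (d + 2) in
    forall t : nat, (1 <= t <= 2 ^ i)%nat ->
      sum_active act (fun v => (mustar - mu v) * INR (n_t play t v)) t
        <= K * Rpower (C * INR i) (1 - gamma) * Rpower (INR t) gamma.
Proof.
  exists 289. split; [lra|].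
  intros X L mu mustar C d i act play rew HL Hmu Hsup HC Hzd Hi Hz Hc gamma t Ht.
  destruct Hzd as [Hd0 [Hcov _]].
  assert (HD : forall v, 0 <= mustar - mu v <= 1).
  { intros v. pose proof (gap_nonneg mu mustar v Hsup).
    assert (mustar <= 1) by (apply (proj2 Hsup); intros r [x ->]; apply Hmu).
    pose proof (proj1 Hmu v). lra. }
  assert (Hti : 1 <= INR t) by (apply (le_INR 1); lia).
  assert (HI : 1 <= INR i) by (apply (le_INR 1); lia).
  assert (Hn : forall v, INR (n_t play t v) * ((mustar - mu v)*(mustar - mu v)) <= 72 * INR i).
  { intros v. unfold n_t. apply (factB L mu mustar i act play rew); auto; lia. }
  assert (HCi : 0 < C * INR i / INR t).
  { apply Rdiv_lt_0_compat; [apply Rmult_lt_0_compat|]; lra. }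
  set (a := ln (C * INR i / INR t) / (d + 2)).
  set (δ := exp a).
  assert (Hδ : 0 < δ) by apply exp_pos.
  destruct (unbounded (/ δ)) as [M HM].
  assert (HM2 : / 2 ^ (S M) < δ).
  { pose proof (nat_lt_pow2 (S M)). rewrite S_INR in H.
    assert (0 < 2 ^ S M) by (apply pow_lt; lra).
    rewrite <- (Rinv_inv δ). apply Rinv_lt_contravar.
    - apply Rmult_lt_0_compat; [apply Rinv_0_lt_compat|]; lra.
    - lra. }
  set (g := fun k v => 144 * INR i * 2 ^ k *
     (if excluded_middle_informative
        ((/ 2 ^ k / 2 < mustar - mu v <= / 2 ^ k) /\ δ < mustar - mu v) then 1 else 0)).
  assert (Hg0 : forall k v, 0 <= g k v).
  { intros k v. unfold g. assert (0 < 2 ^ k) by (apply pow_lt; lra).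
    destruct (excluded_middle_informative _); nra. }
  assert (Hpt : forall v, (mustar - mu v) * INR (n_t play t v)
      <= δ * INR (n_t play t v) + sum_f_R0 (fun k => g k v) M).
  { intros v. pose proof (pos_INR (n_t play t v)). pose proof (HD v).
    pose proof (cond_pos_sum (fun k => g k v) M (fun k => Hg0 k v)).
    destruct (Rle_lt_dec (mustar - mu v) δ) as [Hle|Hlt].
    - assert ((mustar - mu v) * INR (n_t play t v) <= δ * INR (n_t play t v))
        by (apply Rmult_le_compat_r; lra). lra.
    - destruct (shell_ex M (mustar - mu v) ltac:(lra) ltac:(lra)) as [k [Hk Hsh]].
      pose proof (sumf_ge M (fun k => g k v) k (fun k => Hg0 k v) Hk). simpl in H2.
      assert (Hgk : g k v = 144 * INR i * 2 ^ k).
      { unfold g. destruct (excluded_middle_informative _) as [_|Hno]; [ring|].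
        exfalso; apply Hno; split; auto. }
      assert (0 < 2 ^ k) by (apply pow_lt; lra).
      set (Dv := mustar - mu v) in *. set (n := INR (n_t play t v)) in *.
      assert (Hinv : 1 < Dv * (2 * 2 ^ k)).
      { destruct Hsh as [Hsh _]. apply Rmult_lt_compat_r with (r := 2 * 2 ^ k) in Hsh; [|lra].
        replace (/ 2 ^ k / 2 * (2 * 2 ^ k)) with 1 in Hsh by (field; lra). lra. }
      assert (Dv * n <= 144 * INR i * 2 ^ k).
      { pose proof (Hn v). fold Dv n in H4.
        assert (Dv * n * 1 <= Dv * n * (Dv * (2 * 2^k))).
        { apply Rmult_le_compat_l; [apply Rmult_le_pos|]; lra. }
        nra. }
      assert (0 <= δ * n) by (apply Rmult_le_pos; lra).
      lra. }
  eapply Rle_trans; [apply sa_le, Hpt|].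
  rewrite (sa_lin act δ (fun v => INR (n_t play t v)) (fun v => sum_f_R0 (fun k => g k v) M)).
  rewrite sa_exch.
  assert (Hsn : sum_active act (fun v => INR (n_t play t v)) t <= INR t).
  { unfold n_t. eapply Rle_trans; [apply (sum_n L i act play rew t); auto; lia|].
    apply le_INR; lia. }
  set (x := exp ((d + 1) * ln 2)).
  set (E := exp (- (d + 1) * a)).
  assert (Hln2 : 0 < ln 2) by (rewrite <- ln_1; apply ln_increasing; lra).
  assert (Hsh : forall k, (k <= M)%nat -> sum_active act (g k) t <=
     (if excluded_middle_informative (δ < / 2 ^ k) then x ^ k else 0) * (144 * INR i * C)).
  { intros k _. assert (Hp : 0 < 2 ^ k) by (apply pow_lt; lra).
    assert (Hgk : sum_active act (g k) t = 144 * INR i * 2 ^ k *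
      sum_active act (fun v => if excluded_middle_informative
        ((/ 2 ^ k / 2 < mustar - mu v <= / 2 ^ k) /\ δ < mustar - mu v) then 1 else 0) t).
    { rewrite <- sa_scal. apply sa_ext. intros v. unfold g. ring. }
    rewrite Hgk.
    destruct (excluded_middle_informative (δ < / 2 ^ k)) as [Hok|Hno].
    - pose proof (count_shell L mu mustar C d i act play rew (/ 2 ^ k)
         (fun v => δ < mustar - mu v) t HL Hmu Hsup Hi Hz Hc Hcov) as Hcs.
      assert (Hr : 0 < / 2 ^ k <= 1).
      { split; [apply Rinv_0_lt_compat; lra|]. rewrite <- Rinv_1. apply Rinv_le_contravar; [lra|].
        apply pow_R1_Rle; lra. }
      specialize (Hcs Hr ltac:(lia)).
      assert (Hx : 2 ^ k * Rpower (/ 2 ^ k) (- d) = x ^ k).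
      { unfold Rpower, x. rewrite <- exp_nat. rewrite ln_Rinv by lra.
        rewrite ln_pow by lra. rewrite pow2_exp, <- exp_plus. f_equal. ring. }
      assert (0 <= 144 * INR i * 2 ^ k) by (apply Rmult_le_pos; [|lra]; apply Rmult_le_pos; lra).
      apply Rle_trans with (144 * INR i * 2 ^ k * (C * Rpower (/ 2 ^ k) (- d))).
      + apply Rmult_le_compat_l; auto.
      + rewrite <- Hx. right. ring.
    - replace (sum_active act _ t) with (sum_active act (fun _ => 0) t).
      + assert (Z : sum_active act (fun _ : X => 0) t = 0).
        { clear. induction t; simpl; [ring|]. rewrite IHt. destruct (act (S t)); ring. }
        rewrite Z. lra.
      + apply sa_ext. intros v. destruct (excluded_middle_informative _) as [[[_ H1] H2]|]; auto.
        exfalso; apply Hno; lra. }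
  pose proof (sum_Rle _ _ M Hsh) as Hs1.
  rewrite <- scal_sum in Hs1.
  assert (Hgeo := geo (fun k => δ < / 2 ^ k) x E).
  assert (Hx2 : 2 <= x).
  { unfold x. replace ((d + 1) * ln 2) with (d * ln 2 + ln 2) by ring.
    rewrite exp_plus, exp_ln by lra.
    pose proof (exp_ineq1_le (d * ln 2)). assert (0 <= d * ln 2) by (apply Rmult_le_pos; lra).
    lra. }
  specialize (Hgeo Hx2 (Rlt_le _ _ (exp_pos _))).
  assert (Hdown : forall k, δ < / 2 ^ S k -> δ < / 2 ^ k).
  { intros k Hk. simpl in Hk. assert (0 < 2 ^ k) by (apply pow_lt; lra).
    rewrite Rinv_mult in Hk. assert (0 < / 2 ^ k) by (apply Rinv_0_lt_compat; lra). lra. }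
  specialize (Hgeo Hdown).
  assert (Hb : forall k, δ < / 2 ^ k -> x ^ k <= E).
  { intros k Hk. unfold x, E. rewrite <- exp_nat. left. apply exp_increasing.
    apply ln_increasing in Hk; auto. unfold δ in Hk. rewrite ln_exp, ln_Rinv, ln_pow in Hk by (try apply pow_lt; lra).
    pose proof (Rmult_lt_compat_l (d + 1) _ _ ltac:(lra) Hk). nra. }
  specialize (Hgeo Hb M).
  assert (HCE : C * INR i * E = INR t * δ).
  { unfold E, δ. assert (Ea : exp ((d + 2) * a) = C * INR i / INR t).
    { unfold a. replace ((d + 2) * (ln (C * INR i / INR t) / (d + 2))) with (ln (C * INR i / INR t))
        by (field; lra). apply exp_ln; auto. }
    replace (C * INR i) with (INR t * exp ((d + 2) * a)) by (rewrite Ea; field; lra).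
    rewrite Rmult_assoc, <- exp_plus. f_equal. f_equal. ring. }
  assert (HR : Rpower (C * INR i) (1 - gamma) * Rpower (INR t) gamma = δ * INR t).
  { unfold Rpower, δ, gamma, a. rewrite <- exp_plus. rewrite <- (exp_ln (INR t)) at 3 by lra.
    rewrite <- exp_plus. f_equal. unfold Rdiv at 2. rewrite ln_mult by (try apply Rinv_0_lt_compat; try apply Rmult_lt_0_compat; lra).
    assert (Hl : ln (C * INR i / INR t) = ln C + ln (INR i) - ln (INR t)).
    { unfold Rdiv. rewrite ln_mult by (try apply Rinv_0_lt_compat; try apply Rmult_lt_0_compat; lra).
      rewrite ln_mult, ln_Rinv by lra. ring. }
    rewrite Hl. field. lra. }
  rewrite Rmult_assoc, HR.
  assert (0 <= 144 * INR i * C) by (apply Rmult_le_pos; lra).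
  assert (S1 : sum_f_R0 (fun k => sum_active act (g k) t) M <= 288 * (INR t * δ)).
  { rewrite <- HCE. eapply Rle_trans; [apply Hs1|].
    replace (288 * (C * INR i * E)) with ((144 * INR i * C) * (2 * E)) by ring.
    apply Rmult_le_compat_l; auto. }
  assert (δ * sum_active act (fun v => INR (n_t play t v)) t <= δ * INR t) by (apply Rmult_le_compat_l; lra).
  lra.
Qed.
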